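(* Let $h_6$ be the real two-photon Lie algebra. A Lie bialgebra structure $\delta$ on $h_6$ satisfies $\delta(B_+)=0$ if and only if there exist real numbers $a_2,a_3,a_4,a_5,c_2$ with $$a_2a_3-a_5c_2=0$$ such that $\delta(X)=[1\otimes X+X\otimes 1,\,r]$ for all $X\in h_6$, where $$r=a_2\,N\wedge B_++a_3\,A_+\wedge M+a_4\,B_+\wedge M+a_5\,A_+\wedge B_++c_2\,A_+\wedge A_- .$$ Moreover, $[[r,r]]=-c_2^2\,A_+\wedge A_-\wedge M$, so $r$ is standard (nonzero Schouten bracket) if and only if $c_2\neq 0$, in which case $a_5=a_2a_3/c_2$; and $r$ satisfies the classical Yang–Baxter equation (non-standard case) if and only if $c_2=0$, in which case $a_2a_3=0$.
   Context: The two-photon Lie algebra $h_6$ is the real Lie algebra with basis $\{N,A_+,A_-,B_+,B_-,M\}$ and brackets $[N,A_+]=A_+$, $[N,A_-]=-A_-$, $[A_-,A_+]=M$, $[N,B_+]=2B_+$, $[N,B_-]=-2B_-$, $[B_-,B_+]=4N+2M$, $[A_+,B_-]=-2A_-$, $[A_+,B_+]=0$, $[A_-,B_+]=2A_+$, $[A_-,B_-]=0$, and $M$ central. A Lie bialgebra structure on a Lie algebra $g$ is a linear map $\delta:g\to g\otimes g$ which is a 1-cocycle, i.e. $\delta([X,Y])=[\delta(X),1\otimes Y+Y\otimes 1]+[1\otimes X+X\otimes 1,\delta(Y)]$, and whose dual map $g^*\otimes g^*\to g^*$ is a Lie bracket. For $r=\sum r^{ij}X_i\otimes X_j\in g\wedge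 g$, the Schouten bracket is $[[r,r]]=[r_{12},r_{13}]+[r_{12},r_{23}]+[r_{13},r_{23}]$ with $r_{12}=\sum r^{ij}X_i\otimes X_j\otimes 1$, $r_{13}=\sum r^{ij}X_i\otimes 1\otimes X_j$, $r_{23}=\sum r^{ij}1\otimes X_i\otimes X_j$. Here $X\wedge Y=X\otimes Y-Y\otimes X$. *)

(* Defs.v *)
(* The two-photon Lie algebra h6 over a real field R,
   realised on coordinates: g = 'rV[R]_6 with basis
   e 0 = N, e 1 = A_+, e 2 = A_-, e 3 = B_+, e 4 = B_-, e 5 = M.
   Tensors g (x) g are 6x6 matrices t (t i j = coefficient of e i (x) e j);
   tensors g (x) g (x) g are finite functions on 'I_6 * 'I_6 * 'I_6. *)
From HB Require Import structures.
From mathcomp Require Import all_boot all_order all_algebra.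
From mathcomp Require Import reals.
Set Implicit Arguments. Unset Strict Implicit. Unset Printing Implicit Defensive.
Import Order.TTheory GRing.Theory Num.Theory.
Local Open Scope ring_scope.

Section H6.
Variable R : comNzRingType.

Definition vec := 'rV[R]_6.
Definition ten2 := 'M[R]_6.
Definition ten3 := {ffun 'I_6 * 'I_6 * 'I_6 -> R}.

Definition e (i : nat) : vec := delta_mx 0 (inord i).
Definition h6N : vec := e 0.
Definition h6Ap : vec := e 1.
Definition h6Am : vec := e 2.
Definition h6Bp : vec := e 3.
Definition h6Bm : vec := e 4.
Definition h6M : vec := e 5.

(* [e i, e j] for i < j; all brackets not listed are 0:
   [N,A+]=A+, [N,A-]=-A-, [N,B+]=2B+, [N,B-]=-2B-, [A+,A-]=-M (i.e. [A-,A+]=M),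
   [A+,B-]=-2A-, [A-,B+]=2A+, [B+,B-]=-(4N+2M) (i.e. [B-,B+]=4N+2M),
   [A+,B+]=[A-,B-]=0, M central. *)
Definition br_up (i j : nat) : vec :=
  match i, j with
  | 0, 1 => e 1
  | 0, 2 => - e 2
  | 0, 3 => 2%:R *: e 3
  | 0, 4 => - (2%:R *: e 4)
  | 1, 2 => - e 5
  | 1, 4 => - (2%:R *: e 2)
  | 2, 3 => 2%:R *: e 1
  | 3, 4 => - (4%:R *: e 0 + 2%:R *: e 5)
  | _, _ => 0
  end.

Definition br_basis (i j : 'I_6) : vec :=
  if (i < j)%N then br_up i j else if (j < i)%N then - br_up j i else 0.

Definition br (X Y : vec) : vec :=
  \sum_(i < 6) \sum_(j < 6) (X 0 i * Y 0 j) *: br_basis i j.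

Definition tens (u v : vec) : ten2 := u^T *m v.
Definition wedge (u v : vec) : ten2 := tens u v - tens v u.

Definition scale3 (c : R) (t : ten3) : ten3 := [ffun p => c * t p].

Definition tens3 (u v w : vec) : ten3 :=
  [ffun p : 'I_6 * 'I_6 * 'I_6 => u 0 p.1.1 * v 0 p.1.2 * w 0 p.2].
(* u /\ v /\ w = full antisymmetrisation (no normalising factor) *)
Definition wedge3 (u v w : vec) : ten3 :=
  tens3 u v w - tens3 u w v - tens3 v u w + tens3 v w u + tens3 w u v - tens3 w v u.

Definition adt (X : vec) (t : ten2) : ten2 :=
  \sum_(a < 6) \sum_(b < 6) t a b *: (tens (br X (delta_mx 0 a)) (delta_mx 0 b)
                                      + tens (delta_mx 0 a) (br X (delta_mx 0 b))).

(* commutators in U(g) (x) U(g):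
   [1 (x) X + X (x) 1, t] = ad_X t   and   [t, 1 (x) Y + Y (x) 1] = - ad_Y t *)
Definition tcommL (X : vec) (t : ten2) : ten2 := adt X t.
Definition tcommR (t : ten2) (Y : vec) : ten2 := - adt Y t.

Definition cocycle (delta : vec -> ten2) : Prop :=
  forall X Y : vec,
    delta (br X Y) = tcommR (delta X) Y + tcommL X (delta Y).

(* the dual map g* (x) g* -> g*, with covectors in coordinates w.r.t. the
   dual basis: (xi, eta) |-> (xi (x) eta) o delta *)
Definition dual_br (delta : vec -> ten2) (xi eta : vec) : vec :=
  \row_k \sum_(i < 6) \sum_(j < 6) xi 0 i * eta 0 j * delta (delta_mx 0 k) i j.

(* the dual map is a Lie bracket (it is bilinear by construction) *)
Definition dual_is_Lie (delta : vec -> ten2) : Prop :=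
  (forall xi, dual_br delta xi xi = 0) /\
  (forall xi eta zeta,
     dual_br delta xi (dual_br delta eta zeta)
     + dual_br delta eta (dual_br delta zeta xi)
     + dual_br delta zeta (dual_br delta xi eta) = 0).

Definition lie_bialgebra (delta : {linear vec -> ten2}) : Prop :=
  cocycle delta /\ dual_is_Lie delta.

(* Schouten bracket [[r,r]] = [r12,r13] + [r12,r23] + [r13,r23] *)
Definition schouten (r : ten2) : ten3 :=
  \sum_(i < 6) \sum_(j < 6) \sum_(k < 6) \sum_(l < 6)
    scale3 (r i j * r k l)
      (tens3 (br (delta_mx 0 i) (delta_mx 0 k)) (delta_mx 0 j) (delta_mx 0 l)
     + tens3 (delta_mx 0 i) (br (delta_mx 0 j) (delta_mx 0 k)) (delta_mx 0 l)
     + tens3 (delta_mx 0 i) (delta_mx 0 k) (br (delta_mx 0 j) (delta_mx 0 l))).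

Definition r_mat (a2 a3 a4 a5 c2 : R) : ten2 :=
  a2 *: wedge h6N h6Bp + a3 *: wedge h6Ap h6M + a4 *: wedge h6Bp h6M
  + a5 *: wedge h6Ap h6Bp + c2 *: wedge h6Ap h6Am.

End H6.

(* Main.v *)
Require Import Defs.
From HB Require Import structures.
From mathcomp Require Import all_boot all_order all_algebra.
From mathcomp Require Import reals.
From mathcomp Require Import ring lra.
Set Implicit Arguments. Unset Strict Implicit. Unset Printing Implicit Defensive.
Import Order.TTheory GRing.Theory Num.Theory.
Local Open Scope ring_scope.

Section Basic.
Variable R : realType.
Local Notation vec := ('rV[R]_6).
Definition bbn (i k p : nat) : R :=
  match i, k, p with
  | 0, 1, 1 => 1
  | 0, 2, 2 => -1
  | 0, 3, 3 => 2%:R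
  | 0, 4, 4 => -2%:R
  | 1, 0, 1 => -1
  | 1, 2, 5 => -1
  | 1, 4, 2 => -2%:R
  | 2, 0, 2 => 1
  | 2, 1, 5 => 1
  | 2, 3, 1 => 2%:R
  | 3, 0, 3 => -2%:R
  | 3, 2, 1 => -2%:R
  | 3, 4, 0 => -4%:R
  | 3, 4, 5 => -2%:R
  | 4, 0, 4 => 2%:R
  | 4, 1, 2 => 2%:R
  | 4, 3, 0 => 4%:R
  | 4, 3, 5 => 2%:R
  | _, _, _ => 0
  end.

Lemma eE (n : nat) (k : 'I_6) : (n < 6)%N -> e R n 0 k = (k == n :> nat)%:R.
Proof. by move=> Hn; rewrite /e mxE eqxx /= -val_eqE /= inordK. Qed.

Lemma dE (b k : 'I_6) : (delta_mx 0 b : vec) 0 k = (k == b)%:R.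
Proof. by rewrite mxE eqxx. Qed.

Lemma eqinord (n : nat) (k : 'I_6) : (n < 6)%N -> (k == inord n) = (k == n :> nat).
Proof. by move=> Hn; rewrite -val_eqE /= inordK. Qed.

Lemma bbE (i k p : 'I_6) : br_basis R i k 0 p = bbn i k p.
Proof.
case: i => [[|[|[|[|[|[|?]]]]]] //= Hi];
case: k => [[|[|[|[|[|[|?]]]]]] //= Hk];
case: p => [[|[|[|[|[|[|?]]]]]] //= Hp];
rewrite /br_basis /= ?mxE ?eqinord //=; ring.
Qed.

Lemma tensE (u v : vec) a b : tens u v a b = u 0 a * v 0 b.
Proof. by rewrite /tens !mxE big_ord1 !mxE. Qed.

Lemma brE (X Y : vec) p :
  br X Y 0 p = \sum_(i < 6) \sum_(j < 6) X 0 i * Y 0 j * bbn i j p.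
Proof.
rewrite /br summxE; apply: eq_bigr => i _; rewrite summxE.
by apply: eq_bigr => j _; rewrite mxE bbE.
Qed.

Lemma sumdr (F : 'I_6 -> R) (b : 'I_6) :
  \sum_(j < 6) F j * (j == b)%:R = F b.
Proof.
rewrite (bigD1 b) //= eqxx mulr1 big1 ?addr0 // => j /negbTE ->.
by rewrite mulr0.
Qed.

Lemma sumdl (F : 'I_6 -> R) (b : 'I_6) :
  \sum_(j < 6) (j == b)%:R * F j = F b.
Proof. by rewrite -[RHS]sumdr; apply: eq_bigr => j _; rewrite mulrC. Qed.

Lemma sumdr2 (F : 'I_6 -> R) (b : 'I_6) :
  \sum_(j < 6) F j * (b == j)%:R = F b.
Proof. by rewrite -[RHS]sumdr; apply: eq_bigr => j _; rewrite eq_sym. Qed.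

Lemma sumdl2 (F : 'I_6 -> R) (b : 'I_6) :
  \sum_(j < 6) (b == j)%:R * F j = F b.
Proof. by rewrite -[RHS]sumdr; apply: eq_bigr => j _; rewrite eq_sym mulrC. Qed.

Lemma br_delta (i k p : 'I_6) :
  br (delta_mx 0 i) (delta_mx 0 k) 0 p = bbn i k p.
Proof.
rewrite brE.
under eq_bigr => i' _ do under eq_bigr => j' _ do rewrite !dE -mulrA.
under eq_bigr => i' _ do rewrite -mulr_sumr sumdl.
by rewrite sumdl.
Qed.

Lemma brX (X : vec) (c a : 'I_6) :
  br X (delta_mx 0 c) 0 a = \sum_(i < 6) X 0 i * bbn i c a.
Proof.
rewrite brE; apply: eq_bigr => i _.
under eq_bigr => j' _ do rewrite dE -mulrA.
by rewrite -mulr_sumr sumdl.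
Qed.

Lemma adtE (X : vec) (t : 'M[R]_6) a b :
  adt X t a b = \sum_(c < 6) t c b * br X (delta_mx 0 c) 0 a
              + \sum_(d < 6) t a d * br X (delta_mx 0 d) 0 b.
Proof.
rewrite /adt summxE.
under eq_bigr => c _ do rewrite summxE.
under eq_bigr => c _ do under eq_bigr => d _ do
  rewrite 2!mxE !tensE !dE mulrDr.
under eq_bigr => c _ do rewrite big_split /=.
rewrite big_split /=; congr (_ + _).
  apply: eq_bigr => c _.
  under eq_bigr => d _ do rewrite mulrA.
  by rewrite sumdr2.
rewrite exchange_big /=; apply: eq_bigr => d _.
under eq_bigr => c _ do rewrite mulrCA.
by rewrite sumdl2.
Qed.

Lemma adt_delta (x : 'I_6) (t : 'M[R]_6) a b :
  adt (delta_mx 0 x) t a b = \sum_(c < 6) t c b * bbn x c a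
              + \sum_(d < 6) t a d * bbn x d b.
Proof. by rewrite adtE; congr (_ + _); apply: eq_bigr => c _; rewrite br_delta. Qed.

Lemma addE m n (A B : 'M[R]_(m, n)) i j : (A + B) i j = A i j + B i j.
Proof. by rewrite mxE. Qed.
Lemma oppE m n (A : 'M[R]_(m, n)) i j : (- A) i j = - A i j.
Proof. by rewrite mxE. Qed.
Lemma zeroE m n i j : (0 : 'M[R]_(m, n)) i j = 0.
Proof. by rewrite mxE. Qed.
Lemma scaleE m n c (A : 'M[R]_(m, n)) i j : (c *: A) i j = c * A i j.
Proof. by rewrite mxE. Qed.

Definition dn (i n : nat) : R := (i == n)%:R.
Definition rn (a2 a3 a4 a5 c2 : R) (i j : nat) : R :=
  a2 * (dn i 0 * dn j 3 - dn i 3 * dn j 0) + a3 * (dn i 1 * dn j 5 - dn i 5 * dn j 1)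
  + a4 * (dn i 3 * dn j 5 - dn i 5 * dn j 3) + a5 * (dn i 1 * dn j 3 - dn i 3 * dn j 1)
  + c2 * (dn i 1 * dn j 2 - dn i 2 * dn j 1).

Lemma wedgeE (u v : vec) i j : wedge u v i j = u 0 i * v 0 j - v 0 i * u 0 j.
Proof. by rewrite /wedge addE oppE !tensE. Qed.

Lemma r_matE (a2 a3 a4 a5 c2 : R) (i j : 'I_6) :
  r_mat a2 a3 a4 a5 c2 i j = rn a2 a3 a4 a5 c2 i j.
Proof.
by rewrite /r_mat !addE !scaleE !wedgeE /h6N /h6Ap /h6Am /h6Bp /h6M !eE.
Qed.

Definition rnt (a2 a3 a4 a5 c2 : R) (i j : nat) : R :=
  match i, j with
  | 0, 3 => a2
  | 1, 2 => c2
  | 1, 3 => a5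
  | 1, 5 => a3
  | 2, 1 => - c2
  | 3, 0 => - a2
  | 3, 1 => - a5
  | 3, 5 => a4
  | 5, 1 => - a3
  | 5, 3 => - a4
  | _, _ => 0
  end.

Lemma rnT (a2 a3 a4 a5 c2 : R) (i j : 'I_6) :
  rn a2 a3 a4 a5 c2 i j = rnt a2 a3 a4 a5 c2 i j.
Proof.
case: i => [[|[|[|[|[|[|?]]]]]] //= Hi];
case: j => [[|[|[|[|[|[|?]]]]]] //= Hj];
rewrite /rn /rnt /dn /=; ring.
Qed.

Definition sumn6 (G : nat -> R) : R := G 0%N + G 1%N + G 2%N + G 3%N + G 4%N + G 5%N.

Lemma sum6n (G : nat -> R) : \sum_(i < 6) G i = sumn6 G.
Proof. by rewrite !big_ord_recr big_ord0 /= add0r. Qed.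

Lemma natbE (b : bool) : b%:R = (if b then 1 else 0 : R).
Proof. by case: b. Qed.

Lemma adt_lin (X : vec) (t : 'M[R]_6) :
  adt X t = \sum_(k < 6) X 0 k *: adt (delta_mx 0 k) t.
Proof.
apply/matrixP => a b; rewrite adtE summxE; symmetry.
under eq_bigr => k _ do rewrite mxE adt_delta mulrDr.
rewrite big_split /=; symmetry; congr (_ + _).
  under eq_bigr => c _ do rewrite brX mulr_sumr.
  rewrite exchange_big /=; apply: eq_bigr => k _; rewrite mulr_sumr.
  by apply: eq_bigr => c _; ring.
under eq_bigr => c _ do rewrite brX mulr_sumr.
rewrite exchange_big /=; apply: eq_bigr => k _; rewrite mulr_sumr.
by apply: eq_bigr => c _; ring.
Qed.

End Basic.

Section Forward.
Variable R : realType.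
Local Notation vec := ('rV[R]_6).
Variable delta : {linear vec -> 'M[R]_6}.
Variable Hco : cocycle delta.
Variable Hlie : dual_is_Lie delta.
Variable HB : delta (h6Bp R) = 0.

Definition D (k : 'I_6) : 'M[R]_6 := delta (delta_mx 0 k).
Arguments D : simpl never.
Local Notation d k a b := (D (@inord 5 k%N) (@inord 5 a%N) (@inord 5 b%N)).
Local Notation bb := (@bbn R).

Lemma deltaX (X : vec) : delta X = \sum_(k < 6) X 0 k *: D k.
Proof.
by rewrite {1}(row_sum_delta X) linear_sum; apply: eq_bigr => k _; rewrite linearZ.
Qed.

Lemma brdd (i j : 'I_6) :
  br (delta_mx 0 i) (delta_mx 0 j) = \sum_(m < 6) bb i j m *: (delta_mx 0 m : vec).
Proof.
apply/rowP => p; rewrite br_delta summxE.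
under eq_bigr => m _ do rewrite mxE dE.
by rewrite (sumdr2 (fun m : 'I_6 => bb i j m)).
Qed.

Lemma cocycE (i j p q : 'I_6) :
  \sum_(m < 6) bb i j m * D m p q =
  - adt (delta_mx 0 j) (D i) p q + adt (delta_mx 0 i) (D j) p q.
Proof.
have := Hco (delta_mx 0 i) (delta_mx 0 j).
rewrite brdd linear_sum => /(congr1 (fun M : 'M[R]_6 => M p q)).
rewrite summxE /tcommR /tcommL addE oppE => <-.
by apply: eq_bigr => m _; rewrite linearZ mxE.
Qed.

Lemma db_l (a : 'I_6) (v : vec) k :
  dual_br delta (delta_mx 0 a) v 0 k = \sum_(j < 6) v 0 j * D k a j.
Proof.
rewrite mxE.
under eq_bigr => i _ do under eq_bigr => j _ do rewrite dE -!mulrA.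
under eq_bigr => i _ do rewrite -mulr_sumr.
by rewrite sumdl.
Qed.

Lemma db_dd (a b k : 'I_6) : dual_br delta (delta_mx 0 a) (delta_mx 0 b) 0 k = D k a b.
Proof.
rewrite db_l.
under eq_bigr => j _ do rewrite dE.
by rewrite sumdl.
Qed.

Lemma db_addl (x y v : vec) : dual_br delta (x + y) v = dual_br delta x v + dual_br delta y v.
Proof.
apply/rowP => k; rewrite !mxE -big_split /=; apply: eq_bigr => i _.
rewrite -big_split /=; apply: eq_bigr => j _; rewrite mxE; ring.
Qed.

Lemma db_addr (x y v : vec) : dual_br delta v (x + y) = dual_br delta v x + dual_br delta v y.
Proof.
apply/rowP => k; rewrite !mxE -big_split /=; apply: eq_bigr => i _.
rewrite -big_split /=; apply: eq_bigr => j _; rewrite mxE; ring.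
Qed.

Lemma Ddiag (k a : 'I_6) : D k a a = 0.
Proof.
by rewrite -db_dd (proj1 Hlie) zeroE.
Qed.

Lemma Danti (k a b : 'I_6) : D k b a = - D k a b.
Proof.
have := proj1 Hlie (delta_mx 0 a + delta_mx 0 b).
rewrite db_addl !db_addr => /(congr1 (fun M : vec => M 0 k)).
rewrite !addE !db_dd !Ddiag zeroE => H.
by apply/eqP; rewrite -subr_eq0 opprK; apply/eqP; rewrite -H; ring.
Qed.

Lemma jacE (a b c k : 'I_6) :
  \sum_(j < 6) D j b c * D k a j + \sum_(j < 6) D j c a * D k b j
  + \sum_(j < 6) D j a b * D k c j = 0.
Proof.
have := (proj2 Hlie) (delta_mx 0 a) (delta_mx 0 b) (delta_mx 0 c).
move=> /(congr1 (fun M : vec => M 0 k)); rewrite !addE !db_l zeroE => H; apply: etrans H.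
congr (_ + _ + _); apply: eq_bigr => j _; by rewrite db_dd.
Qed.

Lemma D3 : D (inord 3) = 0.
Proof. exact: HB. Qed.

Definition Dc (k a b : nat) : R :=
  match k, a, b with
  | 0, 0, 1 => d 0 0 1
  | 0, 0, 2 => d 0 0 2
  | 0, 0, 3 => d 0 0 3
  | 0, 0, 4 => d 0 0 4
  | 0, 0, 5 => d 0 0 5
  | 0, 1, 0 => - d 0 0 1
  | 0, 1, 2 => d 0 1 2
  | 0, 1, 3 => d 0 1 3
  | 0, 1, 4 => d 0 1 4
  | 0, 1, 5 => d 0 1 5
  | 0, 2, 0 => - d 0 0 2
  | 0, 2, 1 => - d 0 1 2
  | 0, 2, 3 => d 0 2 3
  | 0, 2, 4 => d 0 2 4
  | 0, 2, 5 => d 0 2 5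
  | 0, 3, 0 => - d 0 0 3
  | 0, 3, 1 => - d 0 1 3
  | 0, 3, 2 => - d 0 2 3
  | 0, 3, 4 => d 0 3 4
  | 0, 3, 5 => d 0 3 5
  | 0, 4, 0 => - d 0 0 4
  | 0, 4, 1 => - d 0 1 4
  | 0, 4, 2 => - d 0 2 4
  | 0, 4, 3 => - d 0 3 4
  | 0, 4, 5 => d 0 4 5
  | 0, 5, 0 => - d 0 0 5
  | 0, 5, 1 => - d 0 1 5
  | 0, 5, 2 => - d 0 2 5
  | 0, 5, 3 => - d 0 3 5
  | 0, 5, 4 => - d 0 4 5
  | 1, 0, 1 => d 1 0 1
  | 1, 0, 2 => d 1 0 2
  | 1, 0, 3 => d 1 0 3
  | 1, 0, 4 => d 1 0 4
  | 1, 0, 5 => d 1 0 5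
  | 1, 1, 0 => - d 1 0 1
  | 1, 1, 2 => d 1 1 2
  | 1, 1, 3 => d 1 1 3
  | 1, 1, 4 => d 1 1 4
  | 1, 1, 5 => d 1 1 5
  | 1, 2, 0 => - d 1 0 2
  | 1, 2, 1 => - d 1 1 2
  | 1, 2, 3 => d 1 2 3
  | 1, 2, 4 => d 1 2 4
  | 1, 2, 5 => d 1 2 5
  | 1, 3, 0 => - d 1 0 3
  | 1, 3, 1 => - d 1 1 3
  | 1, 3, 2 => - d 1 2 3
  | 1, 3, 4 => d 1 3 4
  | 1, 3, 5 => d 1 3 5
  | 1, 4, 0 => - d 1 0 4
  | 1, 4, 1 => - d 1 1 4
  | 1, 4, 2 => - d 1 2 4
  | 1, 4, 3 => - d 1 3 4
  | 1, 4, 5 => d 1 4 5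
  | 1, 5, 0 => - d 1 0 5
  | 1, 5, 1 => - d 1 1 5
  | 1, 5, 2 => - d 1 2 5
  | 1, 5, 3 => - d 1 3 5
  | 1, 5, 4 => - d 1 4 5
  | 2, 0, 1 => d 2 0 1
  | 2, 0, 2 => d 2 0 2
  | 2, 0, 3 => d 2 0 3
  | 2, 0, 4 => d 2 0 4
  | 2, 0, 5 => d 2 0 5
  | 2, 1, 0 => - d 2 0 1
  | 2, 1, 2 => d 2 1 2
  | 2, 1, 3 => d 2 1 3
  | 2, 1, 4 => d 2 1 4
  | 2, 1, 5 => d 2 1 5
  | 2, 2, 0 => - d 2 0 2
  | 2, 2, 1 => - d 2 1 2
  | 2, 2, 3 => d 2 2 3
  | 2, 2, 4 => d 2 2 4
  | 2, 2, 5 => d 2 2 5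
  | 2, 3, 0 => - d 2 0 3
  | 2, 3, 1 => - d 2 1 3
  | 2, 3, 2 => - d 2 2 3
  | 2, 3, 4 => d 2 3 4
  | 2, 3, 5 => d 2 3 5
  | 2, 4, 0 => - d 2 0 4
  | 2, 4, 1 => - d 2 1 4
  | 2, 4, 2 => - d 2 2 4
  | 2, 4, 3 => - d 2 3 4
  | 2, 4, 5 => d 2 4 5
  | 2, 5, 0 => - d 2 0 5
  | 2, 5, 1 => - d 2 1 5
  | 2, 5, 2 => - d 2 2 5
  | 2, 5, 3 => - d 2 3 5
  | 2, 5, 4 => - d 2 4 5
  | 4, 0, 1 => d 4 0 1
  | 4, 0, 2 => d 4 0 2
  | 4, 0, 3 => d 4 0 3
  | 4, 0, 4 => d 4 0 4
  | 4, 0, 5 => d 4 0 5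
  | 4, 1, 0 => - d 4 0 1
  | 4, 1, 2 => d 4 1 2
  | 4, 1, 3 => d 4 1 3
  | 4, 1, 4 => d 4 1 4
  | 4, 1, 5 => d 4 1 5
  | 4, 2, 0 => - d 4 0 2
  | 4, 2, 1 => - d 4 1 2
  | 4, 2, 3 => d 4 2 3
  | 4, 2, 4 => d 4 2 4
  | 4, 2, 5 => d 4 2 5
  | 4, 3, 0 => - d 4 0 3
  | 4, 3, 1 => - d 4 1 3
  | 4, 3, 2 => - d 4 2 3
  | 4, 3, 4 => d 4 3 4
  | 4, 3, 5 => d 4 3 5
  | 4, 4, 0 => - d 4 0 4
  | 4, 4, 1 => - d 4 1 4
  | 4, 4, 2 => - d 4 2 4
  | 4, 4, 3 => - d 4 3 4
  | 4, 4, 5 => d 4 4 5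
  | 4, 5, 0 => - d 4 0 5
  | 4, 5, 1 => - d 4 1 5
  | 4, 5, 2 => - d 4 2 5
  | 4, 5, 3 => - d 4 3 5
  | 4, 5, 4 => - d 4 4 5
  | 5, 0, 1 => d 5 0 1
  | 5, 0, 2 => d 5 0 2
  | 5, 0, 3 => d 5 0 3
  | 5, 0, 4 => d 5 0 4
  | 5, 0, 5 => d 5 0 5
  | 5, 1, 0 => - d 5 0 1
  | 5, 1, 2 => d 5 1 2
  | 5, 1, 3 => d 5 1 3
  | 5, 1, 4 => d 5 1 4
  | 5, 1, 5 => d 5 1 5
  | 5, 2, 0 => - d 5 0 2
  | 5, 2, 1 => - d 5 1 2
  | 5, 2, 3 => d 5 2 3
  | 5, 2, 4 => d 5 2 4
  | 5, 2, 5 => d 5 2 5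
  | 5, 3, 0 => - d 5 0 3
  | 5, 3, 1 => - d 5 1 3
  | 5, 3, 2 => - d 5 2 3
  | 5, 3, 4 => d 5 3 4
  | 5, 3, 5 => d 5 3 5
  | 5, 4, 0 => - d 5 0 4
  | 5, 4, 1 => - d 5 1 4
  | 5, 4, 2 => - d 5 2 4
  | 5, 4, 3 => - d 5 3 4
  | 5, 4, 5 => d 5 4 5
  | 5, 5, 0 => - d 5 0 5
  | 5, 5, 1 => - d 5 1 5
  | 5, 5, 2 => - d 5 2 5
  | 5, 5, 3 => - d 5 3 5
  | 5, 5, 4 => - d 5 4 5
  | _, _, _ => 0
  end.

Lemma DcN (k a b : nat) : (k < 6)%N -> (a < 6)%N -> (b < 6)%N ->
  D (inord k) (inord a) (inord b) = Dc k a b.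
Proof.
case: k => [|[|[|[|[|[|k]]]]]] // _;
case: a => [|[|[|[|[|[|a]]]]]] // _;
case: b => [|[|[|[|[|[|b]]]]]] // _;
rewrite /Dc /=;
first [ reflexivity | by rewrite Danti | by rewrite Ddiag | by rewrite D3 zeroE ].
Qed.

Lemma DcE (k a b : 'I_6) : D k a b = Dc k a b.
Proof. by have := DcN (ltn_ord k) (ltn_ord a) (ltn_ord b); rewrite !inord_val. Qed.

Lemma cocycO (i j p q : 'I_6) :
  \sum_(m < 6) bb i j m * Dc m p q =
  - (\sum_(c < 6) Dc i c q * bb j c p + \sum_(c < 6) Dc i p c * bb j c q)
  + (\sum_(c < 6) Dc j c q * bb i c p + \sum_(c < 6) Dc j p c * bb i c q).
Proof.
have E := cocycE i j p q; rewrite !adt_delta in E.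
apply: etrans (etrans _ E) _.
  by apply: eq_bigr => m _; rewrite DcE.
by congr (- (_ + _) + (_ + _)); apply: eq_bigr => c _; rewrite DcE.
Qed.

Lemma cocycN (i j p q : nat) : (i < 6)%N -> (j < 6)%N -> (p < 6)%N -> (q < 6)%N ->
  \sum_(m < 6) bb i j m * Dc m p q =
  - (\sum_(c < 6) Dc i c q * bb j c p + \sum_(c < 6) Dc i p c * bb j c q)
  + (\sum_(c < 6) Dc j c q * bb i c p + \sum_(c < 6) Dc j p c * bb i c q).
Proof.
move=> Hi Hj Hp Hq.
by have := cocycO (inord i) (inord j) (inord p) (inord q); rewrite !inordK.
Qed.

Ltac cexp i j p q := let H := fresh "H" in
  have H := @cocycN i j p q erefl erefl erefl erefl;
  rewrite !big_ord_recr !big_ord0 /= in H.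

Lemma S_1_0_3 : d 1 0 3 = 0.
Proof. cexp 0%N 1%N 0%N 3%N.  lra. Qed.

Lemma S_1_0_4 : d 1 0 4 = 0.
Proof. cexp 0%N 1%N 0%N 4%N.  lra. Qed.

Lemma S_0_3_4 : d 0 3 4 = 0.
Proof. cexp 0%N 1%N 2%N 3%N.  lra. Qed.

Lemma S_1_2_4 : d 1 2 4 = 0.
Proof. cexp 0%N 1%N 2%N 4%N.  lra. Qed.

Lemma S_1_3_4 : d 1 3 4 = 0.
Proof. cexp 0%N 1%N 3%N 4%N.  lra. Qed.

Lemma S_2_0_3 : d 2 0 3 = 0.
Proof. cexp 0%N 2%N 0%N 3%N.  lra. Qed.

Lemma S_2_0_4 : d 2 0 4 = 0.
Proof. cexp 0%N 2%N 0%N 4%N.  lra. Qed.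

Lemma S_2_1_3 : d 2 1 3 = 0.
Proof. cexp 0%N 2%N 1%N 3%N.  lra. Qed.

Lemma S_2_3_4 : d 2 3 4 = 0.
Proof. cexp 0%N 2%N 3%N 4%N.  lra. Qed.

Lemma S_0_2_4 : d 0 2 4 = 0.
Proof. cexp 0%N 3%N 0%N 2%N.  lra. Qed.

Lemma S_0_0_2 : d 0 0 2 = 0.
Proof. cexp 0%N 3%N 2%N 3%N.  lra. Qed.

Lemma S_0_0_4 : d 0 0 4 = 0.
Proof. cexp 0%N 3%N 3%N 4%N.  lra. Qed.

Lemma S_0_0_5 : d 0 0 5 = 0.
Proof. cexp 0%N 3%N 3%N 5%N. have := S_0_3_4. lra. Qed.

Lemma S_0_4_5 : d 0 4 5 = 0.
Proof. cexp 0%N 3%N 5%N 0%N. have := S_0_0_4. lra. Qed.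

Lemma S_4_0_3 : d 4 0 3 = 0.
Proof. cexp 0%N 4%N 0%N 3%N.  lra. Qed.

Lemma S_4_1_2 : d 4 1 2 = 0.
Proof. cexp 0%N 4%N 1%N 2%N.  lra. Qed.

Lemma S_4_1_3 : d 4 1 3 = 0.
Proof. cexp 0%N 4%N 1%N 3%N.  lra. Qed.

Lemma S_0_0_1 : d 0 0 1 = - (1%:R / 2%:R) * d 4 1 4.
Proof. cexp 0%N 4%N 1%N 4%N.  lra. Qed.

Lemma S_0_1_3 : d 0 1 3 = (3%:R / 2%:R) * d 4 2 3.
Proof. cexp 0%N 4%N 2%N 3%N.  lra. Qed.

Lemma S_0_0_3 : d 0 0 3 = - d 4 3 4.
Proof. cexp 0%N 4%N 3%N 4%N.  lra. Qed.

Lemma S_4_3_5 : d 4 3 5 = 0.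
Proof. cexp 0%N 4%N 3%N 5%N.  lra. Qed.

Lemma S_0_3_5 : d 0 3 5 = (1%:R / 2%:R) * d 4 0 5 + (1%:R / 2%:R) * d 4 3 4.
Proof. cexp 0%N 4%N 5%N 0%N. have := S_0_0_3. lra. Qed.

Lemma S_4_1_5 : d 4 1 5 = d 4 2 3.
Proof. cexp 0%N 4%N 5%N 1%N. have := S_0_1_3. lra. Qed.

Lemma S_5_0_1 : d 5 0 1 = 0.
Proof. cexp 0%N 5%N 0%N 1%N.  lra. Qed.

Lemma S_5_0_2 : d 5 0 2 = 0.
Proof. cexp 0%N 5%N 0%N 2%N.  lra. Qed.

Lemma S_5_0_3 : d 5 0 3 = 0.
Proof. cexp 0%N 5%N 0%N 3%N.  lra. Qed.

Lemma S_5_0_4 : d 5 0 4 = 0.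
Proof. cexp 0%N 5%N 0%N 4%N.  lra. Qed.

Lemma S_5_1_3 : d 5 1 3 = 0.
Proof. cexp 0%N 5%N 1%N 3%N.  lra. Qed.

Lemma S_5_1_4 : d 5 1 4 = 0.
Proof. cexp 0%N 5%N 1%N 4%N.  lra. Qed.

Lemma S_5_1_5 : d 5 1 5 = 0.
Proof. cexp 0%N 5%N 1%N 5%N.  lra. Qed.

Lemma S_5_2_3 : d 5 2 3 = 0.
Proof. cexp 0%N 5%N 2%N 3%N.  lra. Qed.

Lemma S_5_2_4 : d 5 2 4 = 0.
Proof. cexp 0%N 5%N 2%N 4%N.  lra. Qed.

Lemma S_5_2_5 : d 5 2 5 = 0.
Proof. cexp 0%N 5%N 2%N 5%N.  lra. Qed.

Lemma S_5_3_5 : d 5 3 5 = 0.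
Proof. cexp 0%N 5%N 3%N 5%N.  lra. Qed.

Lemma S_5_4_5 : d 5 4 5 = 0.
Proof. cexp 0%N 5%N 4%N 5%N.  lra. Qed.

Lemma S_5_3_4 : d 5 3 4 = 0.
Proof. cexp 1%N 2%N 3%N 4%N.  lra. Qed.

Lemma S_1_4_5 : d 1 4 5 = 0.
Proof. cexp 1%N 3%N 0%N 5%N. have := S_1_0_4. lra. Qed.

Lemma S_1_0_2 : d 1 0 2 = 0.
Proof. cexp 1%N 3%N 2%N 3%N.  lra. Qed.

Lemma S_1_0_5 : d 1 0 5 = 0.
Proof. cexp 1%N 3%N 3%N 5%N. have := S_1_3_4. lra. Qed.

Lemma S_2_3_5 : d 2 3 5 = - (1%:R / 2%:R) * d 4 2 3.
Proof. cexp 1%N 4%N 3%N 5%N.  lra. Qed.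

Lemma S_2_2_4 : d 2 2 4 = 0.
Proof. cexp 2%N 3%N 0%N 2%N. have := S_1_0_2. lra. Qed.

Lemma S_2_4_5 : d 2 4 5 = 0.
Proof. cexp 2%N 3%N 0%N 5%N. have := S_1_0_5. have := S_2_0_4. lra. Qed.

Lemma S_1_1_2 : d 1 1 2 = 0.
Proof. cexp 2%N 3%N 1%N 2%N.  lra. Qed.

Lemma S_1_1_4 : d 1 1 4 = 0.
Proof. cexp 2%N 3%N 1%N 4%N. have := S_2_2_4. lra. Qed.

Lemma S_1_2_5 : d 1 2 5 = 0.
Proof. cexp 2%N 3%N 2%N 5%N. have := S_2_2_4. lra. Qed.

Lemma S_4_0_1 : d 4 0 1 = - 2%:R * d 4 2 3.
Proof. cexp 2%N 4%N 0%N 5%N. have := S_2_3_5. have := S_2_0_3. lra. Qed.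

Lemma S_2_0_1 : d 2 0 1 = - d 4 3 4.
Proof. cexp 2%N 4%N 1%N 4%N.  lra. Qed.

Lemma S_2_2_3 : d 2 2 3 = - (1%:R / 2%:R) * d 4 3 4.
Proof. cexp 2%N 4%N 2%N 0%N. have := S_2_0_1. lra. Qed.

Lemma S_2_1_5 : d 2 1 5 = (1%:R / 2%:R) * d 4 0 5 + (1%:R / 2%:R) * d 4 3 4.
Proof. cexp 2%N 4%N 2%N 5%N. have := S_2_2_3. have := S_4_1_2. lra. Qed.

Lemma S_2_0_5 : d 2 0 5 = - (1%:R / 2%:R) * d 4 1 4.
Proof. cexp 2%N 4%N 4%N 5%N. have := S_2_3_4. lra. Qed.

Lemma S_4_0_2 : d 4 0 2 = d 4 1 4.
Proof. cexp 3%N 4%N 0%N 1%N. have := S_0_0_1. have := S_5_0_1. lra. Qed.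

Lemma S_4_2_4 : d 4 2 4 = 0.
Proof. cexp 3%N 4%N 0%N 2%N. have := S_0_0_2. have := S_5_0_2. lra. Qed.

Lemma S_0_1_4 : d 0 1 4 = 0.
Proof. cexp 3%N 4%N 1%N 4%N. have := S_5_1_4. have := S_4_2_4. lra. Qed.

Lemma S_0_1_5 : d 0 1 5 = (1%:R / 2%:R) * d 4 1 4 + (1%:R / 2%:R) * d 4 2 5.
Proof. cexp 3%N 4%N 1%N 5%N. have := S_5_1_5. lra. Qed.

Lemma S_0_2_3 : d 0 2 3 = - (1%:R / 2%:R) * d 4 1 4.
Proof. cexp 3%N 4%N 2%N 3%N. have := S_5_2_3. have := S_4_0_2. lra. Qed.

Lemma S_0_2_5 : d 0 2 5 = 0.
Proof. cexp 3%N 4%N 2%N 5%N. have := S_5_2_5. have := S_4_2_4. lra. Qed.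

Lemma S_4_0_4 : d 4 0 4 = 0.
Proof. cexp 3%N 4%N 3%N 4%N. have := S_0_3_4. have := S_5_3_4. lra. Qed.

Lemma S_5_0_5 : d 5 0 5 = 0.
Proof. cexp 3%N 5%N 3%N 5%N. have := S_5_3_4. lra. Qed.

Lemma S_1_1_3 : d 1 1 3 = (1%:R / 2%:R) * d 4 3 4.
Proof. cexp 0%N 1%N 1%N 3%N. have := S_0_0_3. lra. Qed.

Lemma S_0_1_2 : d 0 1 2 = 0.
Proof. cexp 0%N 1%N 1%N 5%N. have := S_0_0_5. lra. Qed.

Lemma S_1_3_5 : d 1 3 5 = - (1%:R / 2%:R) * d 4 1 4.
Proof. cexp 0%N 1%N 3%N 5%N. have := S_0_2_3. lra. Qed.

Lemma S_2_1_2 : d 2 1 2 = (3%:R / 2%:R) * d 4 1 4.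
Proof. cexp 0%N 2%N 1%N 2%N. have := S_0_2_3. have := S_0_0_1. lra. Qed.

Lemma S_5_1_2 : d 5 1 2 = 0.
Proof. cexp 1%N 5%N 1%N 5%N. have := S_5_0_5. lra. Qed.

Lemma S_4_4_5 : d 4 4 5 = 0.
Proof. cexp 3%N 4%N 0%N 5%N. have := S_0_0_5. have := S_5_0_5. have := S_4_0_4. lra. Qed.

Lemma S_1_0_1 : d 1 0 1 = 0.
Proof. cexp 1%N 2%N 0%N 5%N. cexp 1%N 2%N 1%N 2%N. cexp 1%N 3%N 1%N 3%N. cexp 1%N 4%N 0%N 2%N. cexp 1%N 4%N 1%N 4%N. cexp 1%N 4%N 2%N 5%N. cexp 2%N 3%N 0%N 1%N. cexp 2%N 3%N 1%N 5%N. cexp 2%N 3%N 2%N 3%N. cexp 2%N 4%N 2%N 4%N. have := S_4_0_4. have := S_4_4_5. have := S_5_0_5. have := S_5_1_2. lra. Qed.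

Lemma S_1_1_5 : d 1 1 5 = d 2 2 5.
Proof. cexp 1%N 2%N 0%N 5%N. cexp 1%N 2%N 1%N 2%N. cexp 1%N 3%N 1%N 3%N. cexp 1%N 4%N 0%N 2%N. cexp 1%N 4%N 1%N 4%N. cexp 1%N 4%N 2%N 5%N. cexp 2%N 3%N 0%N 1%N. cexp 2%N 3%N 1%N 5%N. cexp 2%N 3%N 2%N 3%N. cexp 2%N 4%N 2%N 4%N. have := S_4_0_4. have := S_4_4_5. have := S_5_0_5. have := S_5_1_2. lra. Qed.

Lemma S_1_2_3 : d 1 2 3 = 0.
Proof. cexp 1%N 2%N 0%N 5%N. cexp 1%N 2%N 1%N 2%N. cexp 1%N 3%N 1%N 3%N. cexp 1%N 4%N 0%N 2%N. cexp 1%N 4%N 1%N 4%N. cexp 1%N 4%N 2%N 5%N. cexp 2%N 3%N 0%N 1%N. cexp 2%N 3%N 1%N 5%N. cexp 2%N 3%N 2%N 3%N. cexp 2%N 4%N 2%N 4%N. have := S_4_0_4. have := S_4_4_5. have := S_5_0_5. have := S_5_1_2. lra. Qed.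

Lemma S_2_0_2 : d 2 0 2 = 0.
Proof. cexp 1%N 2%N 0%N 5%N. cexp 1%N 2%N 1%N 2%N. cexp 1%N 3%N 1%N 3%N. cexp 1%N 4%N 0%N 2%N. cexp 1%N 4%N 1%N 4%N. cexp 1%N 4%N 2%N 5%N. cexp 2%N 3%N 0%N 1%N. cexp 2%N 3%N 1%N 5%N. cexp 2%N 3%N 2%N 3%N. cexp 2%N 4%N 2%N 4%N. have := S_4_0_4. have := S_4_4_5. have := S_5_0_5. have := S_5_1_2. lra. Qed.

Lemma S_2_1_4 : d 2 1 4 = 0.
Proof. cexp 1%N 2%N 0%N 5%N. cexp 1%N 2%N 1%N 2%N. cexp 1%N 3%N 1%N 3%N. cexp 1%N 4%N 0%N 2%N. cexp 1%N 4%N 1%N 4%N. cexp 1%N 4%N 2%N 5%N. cexp 2%N 3%N 0%N 1%N. cexp 2%N 3%N 1%N 5%N. cexp 2%N 3%N 2%N 3%N. cexp 2%N 4%N 2%N 4%N. have := S_4_0_4. have := S_4_4_5. have := S_5_0_5. have := S_5_1_2. lra. Qed.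

Definition Dsol (k a b : nat) : R :=
  match k, a, b with
  | 0, 0, 1 => - (1%:R / 2%:R) * d 4 1 4
  | 0, 0, 3 => - d 4 3 4
  | 0, 1, 0 => - (- (1%:R / 2%:R) * d 4 1 4)
  | 0, 1, 3 => (3%:R / 2%:R) * d 4 2 3
  | 0, 1, 5 => (1%:R / 2%:R) * d 4 1 4 + (1%:R / 2%:R) * d 4 2 5
  | 0, 2, 3 => - (1%:R / 2%:R) * d 4 1 4
  | 0, 3, 0 => - (- d 4 3 4)
  | 0, 3, 1 => - ((3%:R / 2%:R) * d 4 2 3)
  | 0, 3, 2 => - (- (1%:R / 2%:R) * d 4 1 4)
  | 0, 3, 5 => (1%:R / 2%:R) * d 4 0 5 + (1%:R / 2%:R) * d 4 3 4
  | 0, 5, 1 => - ((1%:R / 2%:R) * d 4 1 4 + (1%:R / 2%:R) * d 4 2 5)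
  | 0, 5, 3 => - ((1%:R / 2%:R) * d 4 0 5 + (1%:R / 2%:R) * d 4 3 4)
  | 1, 1, 3 => (1%:R / 2%:R) * d 4 3 4
  | 1, 1, 5 => d 2 2 5
  | 1, 3, 1 => - ((1%:R / 2%:R) * d 4 3 4)
  | 1, 3, 5 => - (1%:R / 2%:R) * d 4 1 4
  | 1, 5, 1 => - (d 2 2 5)
  | 1, 5, 3 => - (- (1%:R / 2%:R) * d 4 1 4)
  | 2, 0, 1 => - d 4 3 4
  | 2, 0, 5 => - (1%:R / 2%:R) * d 4 1 4
  | 2, 1, 0 => - (- d 4 3 4)
  | 2, 1, 2 => (3%:R / 2%:R) * d 4 1 4
  | 2, 1, 5 => (1%:R / 2%:R) * d 4 0 5 + (1%:R / 2%:R) * d 4 3 4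
  | 2, 2, 1 => - ((3%:R / 2%:R) * d 4 1 4)
  | 2, 2, 3 => - (1%:R / 2%:R) * d 4 3 4
  | 2, 2, 5 => d 2 2 5
  | 2, 3, 2 => - (- (1%:R / 2%:R) * d 4 3 4)
  | 2, 3, 5 => - (1%:R / 2%:R) * d 4 2 3
  | 2, 5, 0 => - (- (1%:R / 2%:R) * d 4 1 4)
  | 2, 5, 1 => - ((1%:R / 2%:R) * d 4 0 5 + (1%:R / 2%:R) * d 4 3 4)
  | 2, 5, 2 => - (d 2 2 5)
  | 2, 5, 3 => - (- (1%:R / 2%:R) * d 4 2 3)
  | 4, 0, 1 => - 2%:R * d 4 2 3
  | 4, 0, 2 => d 4 1 4
  | 4, 0, 5 => d 4 0 5
  | 4, 1, 0 => - (- 2%:R * d 4 2 3)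
  | 4, 1, 4 => d 4 1 4
  | 4, 1, 5 => d 4 2 3
  | 4, 2, 0 => - (d 4 1 4)
  | 4, 2, 3 => d 4 2 3
  | 4, 2, 5 => d 4 2 5
  | 4, 3, 2 => - (d 4 2 3)
  | 4, 3, 4 => d 4 3 4
  | 4, 4, 1 => - (d 4 1 4)
  | 4, 4, 3 => - (d 4 3 4)
  | 4, 5, 0 => - (d 4 0 5)
  | 4, 5, 1 => - (d 4 2 3)
  | 4, 5, 2 => - (d 4 2 5)
  | _, _, _ => 0
  end.

Lemma DsolN (k a b : nat) : (k < 6)%N -> (a < 6)%N -> (b < 6)%N ->
  Dc k a b = Dsol k a b.
Proof.
case: k => [|[|[|[|[|[|k]]]]]] // _;
case: a => [|[|[|[|[|[|a]]]]]] // _;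
case: b => [|[|[|[|[|[|b]]]]]] // _;
rewrite /Dc /Dsol /=; rewrite ?S_0_0_1 ?S_0_0_2 ?S_0_0_3 ?S_0_0_4 ?S_0_0_5 ?S_0_1_2 ?S_0_1_3 ?S_0_1_4 ?S_0_1_5 ?S_0_2_3 ?S_0_2_4 ?S_0_2_5 ?S_0_3_4 ?S_0_3_5 ?S_0_4_5 ?S_1_0_1 ?S_1_0_2 ?S_1_0_3 ?S_1_0_4 ?S_1_0_5 ?S_1_1_2 ?S_1_1_3 ?S_1_1_4 ?S_1_1_5 ?S_1_2_3 ?S_1_2_4 ?S_1_2_5 ?S_1_3_4 ?S_1_3_5 ?S_1_4_5 ?S_2_0_1 ?S_2_0_2 ?S_2_0_3 ?S_2_0_4 ?S_2_0_5 ?S_2_1_2 ?S_2_1_3 ?S_2_1_4 ?S_2_1_5 ?S_2_2_3 ?S_2_2_4 ?S_2_3_4 ?S_2_3_5 ?S_2_4_5 ?S_4_0_1 ?S_4_0_2 ?S_4_0_3 ?S_4_0_4 ?S_4_1_2 ?S_4_1_3 ?S_4_1_5 ?S_4_2_4 ?S_4_3_5 ?S_4_4_5 ?S_5_0_1 ?S_5_0_2 ?S_5_0_3 ?S_5_0_4 ?S_5_0_5 ?S_5_1_2 ?S_5_1_3 ?S_5_1_4 ?S_5_1_5 ?S_5_2_3 ?S_5_2_4 ?S_5_2_5 ?S_5_3_4 ?S_5_3_5 ?S_5_4_5; ring.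
Qed.

Lemma DsolE (k a b : 'I_6) : D k a b = Dsol k a b.
Proof. by rewrite DcE DsolN. Qed.

Lemma jacN (a b c k : nat) : (a < 6)%N -> (b < 6)%N -> (c < 6)%N -> (k < 6)%N ->
  \sum_(j < 6) Dsol j b c * Dsol k a j + \sum_(j < 6) Dsol j c a * Dsol k b j
  + \sum_(j < 6) Dsol j a b * Dsol k c j = 0.
Proof.
move=> Ha Hb Hc Hk.
have E := jacE (inord a) (inord b) (inord c) (inord k).
apply: etrans E.
by congr (_ + _ + _); apply: eq_bigr => j _; rewrite !DsolE !inordK.
Qed.

Lemma t0 : d 4 1 4 = 0.
Proof.
have J := @jacN 0%N 1%N 2%N 4%N erefl erefl erefl erefl.
rewrite !big_ord_recr !big_ord0 /= in J.
have : d 4 1 4 * d 4 1 4 = 0.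
  by apply: etrans J; field.
by move/eqP; rewrite mulf_eq0 orbb => /eqP.
Qed.

Lemma rel : d 4 2 5 * d 4 3 4 - 2%:R * d 2 2 5 * d 4 2 3 = 0.
Proof.
have J := @jacN 0%N 1%N 5%N 4%N erefl erefl erefl erefl.
rewrite !big_ord_recr !big_ord0 /= t0 in J.
by apply: etrans J; field.
Qed.

Definition pa2 := - d 4 3 4 / 2%:R.
Definition pa3 := d 4 2 5 / 2%:R.
Definition pa4 := (d 4 0 5 + d 4 3 4) / 4%:R.
Definition pa5 := d 4 2 3 / 2%:R.
Definition pc2 := - d 2 2 5.

Lemma prel : pa2 * pa3 - pa5 * pc2 = 0.
Proof.
have -> : pa2 * pa3 - pa5 * pc2 =
  - (d 4 2 5 * d 4 3 4 - 2%:R * d 2 2 5 * d 4 2 3) / 4%:R.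
  by rewrite /pa2 /pa3 /pa5 /pc2; field.
by rewrite rel oppr0 mul0r.
Qed.

Lemma DkN (k a b : nat) : (k < 6)%N -> (a < 6)%N -> (b < 6)%N ->
  Dsol k a b = sumn6 (fun c => rnt pa2 pa3 pa4 pa5 pc2 c b * bb k c a)
             + sumn6 (fun c => rnt pa2 pa3 pa4 pa5 pc2 a c * bb k c b).
Proof.
case: k => [|[|[|[|[|[|k]]]]]] // _;
case: a => [|[|[|[|[|[|a]]]]]] // _;
case: b => [|[|[|[|[|[|b]]]]]] // _;
cbv beta iota delta [Dsol sumn6 rnt bbn]; rewrite ?t0; unfold pa2, pa3, pa4, pa5, pc2; lra.
Qed.

Lemma Dk_adt (k : 'I_6) : D k = adt (delta_mx 0 k) (r_mat pa2 pa3 pa4 pa5 pc2).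
Proof.
apply/matrixP => a b; rewrite adt_delta DsolE (DkN (ltn_ord k) (ltn_ord a) (ltn_ord b)).
by congr (_ + _); rewrite -sum6n; apply: eq_bigr => c _; rewrite /= r_matE rnT.
Qed.

Lemma forward : exists a2 a3 a4 a5 c2 : R,
  a2 * a3 - a5 * c2 = 0 /\ forall X : vec, delta X = tcommL X (r_mat a2 a3 a4 a5 c2).
Proof.
exists pa2, pa3, pa4, pa5, pc2; split; first exact: prel.
move=> X; rewrite deltaX /tcommL adt_lin; apply: eq_bigr => k _.
by rewrite Dk_adt.
Qed.

End Forward.

Section Sch.
Variable R : realType.
Local Notation vec := ('rV[R]_6).
Local Notation bbn := (@bbn R).

Lemma ffaddE (f g : ten3 R) x : (f + g) x = f x + g x.
Proof. by rewrite ffunE. Qed.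
Lemma ffoppE (f : ten3 R) x : (- f) x = - f x.
Proof. by rewrite ffunE. Qed.

Lemma collapse (F G : 'I_6 -> R) (b : 'I_6) (x : R) :
  (forall j, F j = G j * (b == j)%:R) -> G b = x -> \sum_(j < 6) F j = x.
Proof. by move=> H <-; under eq_bigr do rewrite H; rewrite sumdr2. Qed.

Lemma sum4D (F G H : 'I_6 -> 'I_6 -> 'I_6 -> 'I_6 -> R) :
  \sum_(i < 6) \sum_(j < 6) \sum_(k < 6) \sum_(l < 6) (F i j k l + G i j k l + H i j k l)
  = \sum_(i < 6) \sum_(j < 6) \sum_(k < 6) \sum_(l < 6) F i j k l
  + \sum_(i < 6) \sum_(j < 6) \sum_(k < 6) \sum_(l < 6) G i j k l
  + \sum_(i < 6) \sum_(j < 6) \sum_(k < 6) \sum_(l < 6) H i j k l.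
Proof.
rewrite -!big_split /=; apply: eq_bigr => i _; rewrite -!big_split /=.
apply: eq_bigr => j _; rewrite -!big_split /=.
apply: eq_bigr => k _; by rewrite -!big_split.
Qed.

Lemma schE (r : 'M[R]_6) (a b c : 'I_6) :
  schouten r (a, b, c) =
    \sum_(i < 6) \sum_(k < 6) r i b * r k c * bbn i k a
  + \sum_(j < 6) \sum_(k < 6) r a j * r k c * bbn j k b
  + \sum_(j < 6) \sum_(l < 6) r a j * r b l * bbn j l c.
Proof.
rewrite /schouten sum_ffunE.
transitivity (\sum_(i < 6) \sum_(j < 6) \sum_(k < 6) \sum_(l < 6)
   (r i j * r k l * (bbn i k a * (b == j)%:R * (c == l)%:R)
  + r i j * r k l * ((a == i)%:R * bbn j k b * (c == l)%:R)
  + r i j * r k l * ((a == i)%:R * (b == k)%:R * bbn j l c))).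
  apply: eq_bigr => i _; rewrite sum_ffunE; apply: eq_bigr => j _.
  rewrite sum_ffunE; apply: eq_bigr => k _; rewrite sum_ffunE.
  apply: eq_bigr => l _.
  rewrite ffunE !ffaddE !ffunE /= !br_delta !dE; ring.
rewrite sum4D; congr (_ + _ + _).
- apply: eq_bigr => i _.
  apply: (@collapse _ (fun j => \sum_(k < 6) r i j * r k c * bbn i k a) b) => [j|//].
  rewrite mulr_suml; apply: eq_bigr => k _.
  apply: (@collapse _ (fun l => r i j * r k l * bbn i k a * (b == j)%:R) c) => [l|//].
  ring.
- apply: (@collapse _ (fun i => \sum_(j < 6) \sum_(k < 6) r i j * r k c * bbn j k b) a)
    => [i|//].
  rewrite mulr_suml; apply: eq_bigr => j _; rewrite mulr_suml; apply: eq_bigr => k _.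
  apply: (@collapse _ (fun l => r i j * r k l * bbn j k b * (a == i)%:R) c) => [l|//].
  ring.
- apply: (@collapse _ (fun i => \sum_(j < 6) \sum_(l < 6) r i j * r b l * bbn j l c) a)
    => [i|//].
  rewrite mulr_suml; apply: eq_bigr => j _.
  apply: (@collapse _ (fun k => \sum_(l < 6) r i j * r k l * bbn j l c * (a == i)%:R) b)
    => [k|]; last by rewrite mulr_suml.
  rewrite mulr_suml; apply: eq_bigr => l _; ring.
Qed.

Lemma schR (a2 a3 a4 a5 c2 : R) (a b c : 'I_6) :
  schouten (r_mat a2 a3 a4 a5 c2) (a, b, c) =
    \sum_(i < 6) \sum_(k < 6) rn a2 a3 a4 a5 c2 i b * rn a2 a3 a4 a5 c2 k c * bbn i k a
  + \sum_(j < 6) \sum_(k < 6) rn a2 a3 a4 a5 c2 a j * rn a2 a3 a4 a5 c2 k c * bbn j k b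
  + \sum_(j < 6) \sum_(l < 6) rn a2 a3 a4 a5 c2 a j * rn a2 a3 a4 a5 c2 b l * bbn j l c.
Proof.
rewrite schE; congr (_ + _ + _); apply: eq_bigr => i _; apply: eq_bigr => k _;
  by rewrite !r_matE.
Qed.


Definition T (a2 a3 a4 a5 c2 : R) (a b c : nat) : R :=
  sumn6 (fun i => sumn6 (fun k => rnt a2 a3 a4 a5 c2 i b * rnt a2 a3 a4 a5 c2 k c * bbn i k a))
+ sumn6 (fun j => sumn6 (fun k => rnt a2 a3 a4 a5 c2 a j * rnt a2 a3 a4 a5 c2 k c * bbn j k b))
+ sumn6 (fun j => sumn6 (fun l => rnt a2 a3 a4 a5 c2 a j * rnt a2 a3 a4 a5 c2 b l * bbn j l c)).

Lemma schT (a2 a3 a4 a5 c2 : R) (a b c : 'I_6) :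
  schouten (r_mat a2 a3 a4 a5 c2) (a, b, c) = T a2 a3 a4 a5 c2 a b c.
Proof.
rewrite schR /T; congr (_ + _ + _); rewrite -sum6n; apply: eq_bigr => i _ /=;
rewrite -sum6n; apply: eq_bigr => k _ /=; by rewrite !rnT.
Qed.

Definition wt (a b c : nat) : R :=
  match a, b, c with
  | 1, 2, 5 => 1 | 1, 5, 2 => -1 | 2, 1, 5 => -1
  | 2, 5, 1 => 1 | 5, 1, 2 => 1 | 5, 2, 1 => -1
  | _, _, _ => 0
  end.

Lemma w3E (a b c : 'I_6) : wedge3 (h6Ap R) (h6Am R) (h6M R) (a, b, c) = wt a b c.
Proof.
rewrite /wedge3 !ffaddE !ffoppE !ffunE /= /h6Ap /h6Am /h6M !eE //.
case: a => [[|[|[|[|[|[|?]]]]]] //= Ha];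
case: b => [[|[|[|[|[|[|?]]]]]] //= Hb];
case: c => [[|[|[|[|[|[|?]]]]]] //= Hc]; ring.
Qed.

Lemma eqmod (P : R) (h : P = 0) (k x y : R) : x - y = k * P -> x = y.
Proof. by move=> e; apply/eqP; rewrite -subr_eq0 e h mulr0. Qed.

Lemma schTab (a2 a3 a4 a5 c2 : R) : a2 * a3 - a5 * c2 = 0 ->
  forall a b c : nat, (a < 6)%N -> (b < 6)%N -> (c < 6)%N ->
  T a2 a3 a4 a5 c2 a b c = - c2 ^+ 2 * wt a b c.
Proof.
move=> h a b c.
case: a => [|[|[|[|[|[|a]]]]]] // _;
case: b => [|[|[|[|[|[|b]]]]]] // _;
case: c => [|[|[|[|[|[|c]]]]]] // _;
cbv beta iota delta [T sumn6 rnt bbn wt];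
first [ ring
      | apply/eqP; rewrite -subr_eq0; apply/eqP;
        first [ transitivity (a2 * a3 - a5 * c2); [ring | exact: h]
              | transitivity (- (a2 * a3 - a5 * c2)); [ring | by rewrite h oppr0] ] ].
Qed.

Lemma schouten_main (a2 a3 a4 a5 c2 : R) : a2 * a3 - a5 * c2 = 0 ->
  schouten (r_mat a2 a3 a4 a5 c2)
  = scale3 (- (c2 ^+ 2)) (wedge3 (h6Ap R) (h6Am R) (h6M R)).
Proof.
move=> h; apply/ffunP => -[[a b] c].
rewrite schT ffunE w3E.
exact: (@schTab a2 a3 a4 a5 c2 h a b c (ltn_ord a) (ltn_ord b) (ltn_ord c)).
Qed.

Lemma adtN (a2 a3 a4 a5 c2 : R) (x a b : 'I_6) :
  adt (delta_mx 0 x) (r_mat a2 a3 a4 a5 c2) a b =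
    sumn6 (fun c => rnt a2 a3 a4 a5 c2 c b * bbn x c a)
  + sumn6 (fun c => rnt a2 a3 a4 a5 c2 a c * bbn x c b).
Proof.
by rewrite adt_delta; congr (_ + _); rewrite -sum6n; apply: eq_bigr => c _;
  rewrite /= r_matE rnT.
Qed.

Lemma adtB (a2 a3 a4 a5 c2 : R) :
  adt (h6Bp R) (r_mat a2 a3 a4 a5 c2) = 0.
Proof.
apply/matrixP => a b; rewrite /h6Bp /e adtN zeroE inordK //.
case: a => [[|[|[|[|[|[|?]]]]]] //= Ha];
case: b => [[|[|[|[|[|[|?]]]]]] //= Hb];
cbv beta iota delta [sumn6 rnt bbn]; ring.
Qed.

End Sch.


Theorem mainTheorem3 (R : realType) :
  (forall delta : {linear 'rV[R]_6 -> 'M[R]_6},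
     lie_bialgebra delta ->
     (delta (h6Bp R) = 0 <->
      exists a2 a3 a4 a5 c2 : R,
        a2 * a3 - a5 * c2 = 0 /\
        forall X : 'rV[R]_6, delta X = tcommL X (r_mat a2 a3 a4 a5 c2)))
  /\
  (forall a2 a3 a4 a5 c2 : R,
     a2 * a3 - a5 * c2 = 0 ->
     [/\ schouten (r_mat a2 a3 a4 a5 c2)
           = scale3 (- (c2 ^+ 2)) (wedge3 (h6Ap R) (h6Am R) (h6M R)),
         schouten (r_mat a2 a3 a4 a5 c2) != 0 <-> c2 != 0,
         c2 != 0 -> a5 = a2 * a3 / c2,
         schouten (r_mat a2 a3 a4 a5 c2) = 0 <-> c2 = 0
       & c2 = 0 -> a2 * a3 = 0]).
Proof.
split.
  move=> delta [Hco Hlie]; split.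
    by move=> HB; exact: (forward Hco Hlie HB).
  by move=> [a2 [a3 [a4 [a5 [c2 [_ H]]]]]]; rewrite H /tcommL adtB.
move=> a2 a3 a4 a5 c2 h.
have Hs := schouten_main a4 h.
have Z : scale3 (- (0 ^+ 2)) (wedge3 (h6Ap R) (h6Am R) (h6M R)) = 0.
  by apply/ffunP => p; rewrite !ffunE expr0n /= oppr0 mul0r.
have NZ : c2 != 0 -> scale3 (- (c2 ^+ 2)) (wedge3 (h6Ap R) (h6Am R) (h6M R)) != 0.
  move=> c0; apply/eqP => /ffunP /(_ (inord 1, inord 2, inord 5)).
  rewrite [LHS]ffunE w3E !inordK //= ffunE mulr1 => /eqP; rewrite oppr_eq0 expf_eq0 /=.
  by rewrite (negbTE c0).
split.
- exact: Hs.
- rewrite Hs; split; last exact: NZ.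
  by apply: contra_neq => c0; rewrite c0 Z.
- move=> c0; have e : a2 * a3 = a5 * c2 by apply/eqP; rewrite -subr_eq0 h.
  by rewrite e mulfK.
- rewrite Hs; split; last by move=> ->; rewrite Z.
  by move=> H; apply/eqP; apply/negPn/negP => c0; move: (NZ c0); rewrite H eqxx.
- by move=> c0; move: h; rewrite c0 mulr0 subr0.
Qed.
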